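(* Let $R$ be an integral domain satisfying the irreducible intersection property, and let $p,q$ be prime ideals of $R$. Regarding $R_p$ and $R_q$ as subrings of $\mathrm{Frac}(R)$, the join $[R_p,R_q]$ is a local ring.
   Context: All rings are commutative with $1$. A ring $R$ satisfies the irreducible intersection property if for any prime ideals $p_1,p_2\subset R$, either $p_1+p_2=R$ or $p_1+p_2$ is a prime ideal. For subrings $A,B$ of a ring $K$, the join $[A,B]$ is the smallest subring of $K$ containing both $A$ and $B$. *)

(* Defs.v *)
From HB Require Import structures.
From mathcomp Require Import all_boot all_order all_algebra.
Set Implicit Arguments. Unset Strict Implicit. Unset Printing Implicit Defensive.
Import GRing.Theory.
Local Open Scope ring_scope.

Definition is_ideal (R : comNzRingType) (I : R -> Prop) : Prop :=
  [/\ I 0, (forall x y, I x -> I y -> I (x + y)), (forall x, I x -> I (- x))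
    & (forall r x, I x -> I (r * x))].

Definition is_prime_ideal (R : comNzRingType) (I : R -> Prop) : Prop :=
  [/\ is_ideal I, ~ I 1 & (forall x y, I (x * y) -> I x \/ I y)].

Definition ideal_add (R : comNzRingType) (I J : R -> Prop) : R -> Prop :=
  fun x => exists a b, [/\ I a, J b & x = a + b].

Definition is_whole (R : comNzRingType) (I : R -> Prop) : Prop := forall x, I x.

Definition irreducible_intersection_property (R : comNzRingType) : Prop :=
  forall p1 p2 : R -> Prop, is_prime_ideal p1 -> is_prime_ideal p2 ->
    is_whole (ideal_add p1 p2) \/ is_prime_ideal (ideal_add p1 p2).

Definition is_subring (K : comNzRingType) (S : K -> Prop) : Prop :=
  [/\ S 1, (forall x y, S x -> S y -> S (x - y)) & (forall x y, S x -> S y -> S (x * y))].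

Definition subring_join (K : comNzRingType) (A B : K -> Prop) : K -> Prop :=
  fun x => forall S : K -> Prop, is_subring S ->
    (forall a, A a -> S a) -> (forall b, B b -> S b) -> S x.

Definition is_ideal_of (K : comNzRingType) (S I : K -> Prop) : Prop :=
  [/\ forall x, I x -> S x, I 0, (forall x y, I x -> I y -> I (x - y))
    & (forall r x, S r -> I x -> I (r * x))].

Definition is_maximal_ideal_of (K : comNzRingType) (S M : K -> Prop) : Prop :=
  [/\ is_ideal_of S M, ~ M 1 &
      forall J, is_ideal_of S J -> ~ J 1 -> (forall x, M x -> J x) ->
        forall x, J x -> M x].

Definition is_local_subring (K : comNzRingType) (S : K -> Prop) : Prop :=
  exists M, is_maximal_ideal_of S M /\
    forall M', is_maximal_ideal_of S M' -> forall x, M' x <-> M x.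

Definition localization_in_frac (R : idomainType) (p : R -> Prop)
  : {fraction R} -> Prop :=
  fun x => exists a s : R, ~ p s /\
    x = FracField.tofrac a / FracField.tofrac s.

(* Main.v *)
Require Import Defs.
From mathcomp Require Import all_boot all_order all_algebra ring.
From mathcomp Require classical_sets.
From Stdlib Require Import Classical.
Set Implicit Arguments. Unset Strict Implicit. Unset Printing Implicit Defensive.
Import GRing.Theory.
Local Open Scope ring_scope.

Lemma fmul (F : fieldType) (A B S T S1 T1 : F) : S != 0 -> T != 0 -> S1 != 0 -> T1 != 0 ->
  A / (S * T) * (B / (S1 * T1)) = A * B / (S * S1 * (T * T1)).
Proof. move=> h1 h2 h3 h4. field. by rewrite h1 h2 h3 h4. Qed.
Lemma fsub (F : fieldType) (A B S T S1 T1 : F) : S != 0 -> T != 0 -> S1 != 0 -> T1 != 0 ->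
  A / (S * T) - B / (S1 * T1) = (A * (S1 * T1) - B * (S * T)) / (S * S1 * (T * T1)).
Proof. move=> h1 h2 h3 h4. field. by rewrite h1 h2 h3 h4. Qed.
Lemma fsub2 (F : fieldType) (A B S T S1 T1 : F) : S != 0 -> T != 0 -> S1 != 0 -> T1 != 0 ->
  A / (S * T) - B / (S1 * T1) = (S1 * T1 * A + - (S * T) * B) / (S * S1 * (T * T1)).
Proof. move=> h1 h2 h3 h4. field. by rewrite h1 h2 h3 h4. Qed.
Lemma fsplit (F : fieldType) (A S T : F) : S != 0 -> T != 0 ->
  A / (S * T) = (A / S) * (1 / T).
Proof. move=> h1 h2. field. by rewrite h1 h2. Qed.
Lemma fmul2 (F : fieldType) (A B S T S1 T1 : F) : S != 0 -> T != 0 -> S1 != 0 -> T1 != 0 ->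
  A / (S * T) * (B * (S * T) / (S1 * T1)) = A * B / (S1 * T1).
Proof. move=> h1 h2 h3 h4. field. by rewrite h1 h2 h3 h4. Qed.
Lemma fmul3 (F : fieldType) (A C S T S1 T1 : F) : S != 0 -> T != 0 -> S1 != 0 -> T1 != 0 ->
  C / (S1 * T1) * (A / (S * T)) = C * A / (S1 * S * (T1 * T)).
Proof. move=> h1 h2 h3 h4. field. by rewrite h1 h2 h3 h4. Qed.

Section RingPart.
Variable R : idomainType.
Variables p q : R -> Prop.
Hypothesis hp : is_prime_ideal p.
Hypothesis hq : is_prime_ideal q.
Hypothesis hIIP : irreducible_intersection_property R.

Definition Tm (u : R) := exists s t, [/\ ~ p s, ~ q t & u = s * t].
Definition good (P : R -> Prop) :=
  [/\ is_prime_ideal P, (forall x, P x -> p x) & (forall x, P x -> q x)].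
Definition U (a : R) := exists P, good P /\ P a.

Lemma prime_mul (P : R -> Prop) x y : is_prime_ideal P -> ~ P x -> ~ P y -> ~ P (x * y).
Proof. by case=> _ _ H Hx Hy /H [|]. Qed.

Lemma prime_not1 (P : R -> Prop) : is_prime_ideal P -> ~ P 1.
Proof. by case. Qed.

Lemma Tm1 : Tm 1.
Proof. exists 1, 1; split; [exact: prime_not1|exact: prime_not1|by rewrite mulr1]. Qed.

Lemma TmM u v : Tm u -> Tm v -> Tm (u * v).
Proof.
move=> [s [t [ps qt ->]]] [s' [t' [ps' qt' ->]]].
exists (s * s'), (t * t'); split; [exact: prime_mul|exact: prime_mul|].
by rewrite -!mulrA; congr (_ * _); rewrite mulrC -!mulrA; congr (_ * _); rewrite mulrC.
Qed.

Lemma good_disj P u : good P -> Tm u -> ~ P u.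
Proof.
move=> [hP Pp Pq] [s [t [ps qt ->]]].
apply: prime_mul => //; [move=> /Pp //|move=> /Pq //].
Qed.

Lemma ideal0 (P : R -> Prop) : is_prime_ideal P -> P 0.
Proof. by case=> [[]]. Qed.

Lemma U0 : U 0.
Proof.
exists (fun x => x = 0); split => //; split.
- split; [split => //| |].
  + by move=> x y -> ->; rewrite addr0.
  + by move=> x ->; rewrite oppr0.
  + by move=> r x ->; rewrite mulr0.
  + by apply/eqP; rewrite oner_eq0.
  + by move=> x y /eqP; rewrite mulf_eq0 => /orP [/eqP|/eqP]; [left|right].
- by move=> x ->; exact: ideal0.
- by move=> x ->; exact: ideal0.
Qed.

Lemma U_mul c a : U a -> U (c * a).
Proof. by move=> [P [g Pa]]; exists P; split => //; case: g => [[[_ _ _ HM] _ _] _ _]; apply: HM. Qed.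

Lemma U_add a b : U a -> U b -> U (a + b).
Proof.
move=> [P1 [g1 P1a]] [P2 [g2 P2b]].
have sub : forall z, ideal_add P1 P2 z -> p z /\ q z.
  move=> z [x [y [Hx Hy ->]]]; case: g1 => _ h1 h1'; case: g2 => _ h2 h2'.
  case: hp => [[_ hpa _ _] _ _]; case: hq => [[_ hqa _ _] _ _].
  split; [apply: hpa; [exact: h1|exact: h2]|apply: hqa; [exact: h1'|exact: h2']].
have gP : is_prime_ideal P1 -> is_prime_ideal P2 -> good (ideal_add P1 P2).
  move=> H1 H2; case: (hIIP H1 H2) => [W|Hpr].
  - by exfalso; have [/(prime_not1 hp) //] := sub 1 (W 1).
  - by split => // z /sub [].
exists (ideal_add P1 P2); split; first by case: g1; case: g2 => *; apply: gP.
by exists a, b.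
Qed.

Lemma zorn_prime a : (forall b u, Tm u -> a * b <> u) -> U a.
Proof.
move=> H.
pose iok (I : R -> Prop) := [/\ is_ideal I, I a & forall u, Tm u -> ~ I u].
pose Pf := (fun I : R -> Prop => (forall x, ~ I x) \/ iok I).
have HZ : exists A : classical_sets.set R, Pf A /\
    (forall B : classical_sets.set R, classical_sets.proper A B -> ~ Pf B).
  apply: classical_sets.Zorn_bigcup => F FP Ftot.
  case: (classic (exists X, F X /\ exists x, X x)) => [[X0 [FX0 [x0 X0x0]]]|Hno].
  - have okF : forall X x, F X -> X x -> iok X.
      by move=> X x FX Xx; case: (FP X FX) => // /(_ x).
    have ok0 := okF _ _ FX0 X0x0.
    right; split; [split|..].
    + exists X0 => //; case: ok0 => [[]] //.
    + move=> x y [X FX Xx] [Y FY Yy].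
      case: (Ftot X Y FX FY) => [XY|YX].
      * exists Y => //; have [[_ Ha _ _] _ _] := okF _ _ FY Yy; exact: Ha (XY _ Xx) Yy.
      * exists X => //; have [[_ Ha _ _] _ _] := okF _ _ FX Xx; exact: Ha Xx (YX _ Yy).
    + move=> x [X FX Xx]; exists X => //; have [[_ _ Hn _] _ _] := okF _ _ FX Xx; exact: Hn.
    + move=> r x [X FX Xx]; exists X => //; have [[_ _ _ Hm] _ _] := okF _ _ FX Xx; exact: Hm.
    + by exists X0 => //; case: ok0.
    + move=> u Tu [X FX Xu]; have [_ _ Hd] := okF _ _ FX Xu; exact: Hd Tu Xu.
  - left => x [X FX Xx]; apply: Hno; exists X; split => //; by exists x.
have [A [PA maxA]] := HZ.
have okA : iok A.
  case: PA => // Aempty; exfalso.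
  apply: (maxA (fun z => exists c, z = c * a)).
  - split; first by move=> t /Aempty.
    by move=> /(_ a) H'; apply: (Aempty a); apply: H'; exists 1; rewrite mul1r.
  - right; split; [split|..].
    + by exists 0; rewrite mul0r.
    + by move=> x y [c ->] [d ->]; exists (c + d); rewrite mulrDl.
    + by move=> x [c ->]; exists (- c); rewrite mulNr.
    + by move=> r x [c ->]; exists (r * c); rewrite mulrA.
    + by exists 1; rewrite mul1r.
    + by move=> u Tu [c Hc]; apply: (H c u Tu); rewrite mulrC Hc.
case: okA => [[I0 IA IN IM] Aa Adisj].
have ext : forall x, ~ A x -> exists u c w, [/\ Tm w, A u & w = u + c * x].
  move=> x Ax; apply: NNPP => Hn.
  apply: (maxA (fun z => exists u c, A u /\ z = u + c * x)).
  - split; first by move=> t At; exists t, 0; rewrite mul0r addr0.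
    by move=> /(_ x) H'; apply: Ax; apply: H'; exists 0, 1; rewrite add0r mul1r.
  - right; split; [split|..].
    + by exists 0, 0; rewrite mul0r addr0.
    + move=> y z [u [c [Au ->]]] [u' [c' [Au' ->]]].
      exists (u + u'), (c + c'); split; first exact: IA.
      by rewrite mulrDl; ring.
    + move=> y [u [c [Au ->]]]; exists (- u), (- c); split; first exact: IN.
      by rewrite mulNr opprD.
    + move=> r y [u [c [Au ->]]]; exists (r * u), (r * c); split; first exact: IM.
      by rewrite mulrDr mulrA.
    + by exists a, 0; rewrite mul0r addr0.
    + move=> w Tw [u [c [Au Hw]]]; apply: Hn; exists u, c, w; split => //.
exists A; split => //; split; first split.
- by [].
- by move=> A1; apply: (Adisj 1 Tm1 A1).
- move=> x y Axy; apply: NNPP => Hn.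
  have Ax : ~ A x by move=> ?; apply: Hn; left.
  have Ay : ~ A y by move=> ?; apply: Hn; right.
  have [u1 [c1 [w1 [T1 Au1 E1]]]] := ext x Ax.
  have [u2 [c2 [w2 [T2 Au2 E2]]]] := ext y Ay.
  apply: (Adisj (w1 * w2) (TmM T1 T2)).
  have -> : w1 * w2 = w2 * u1 + (c1 * x) * u2 + (c1 * c2) * (x * y).
    by rewrite E1 E2; ring.
  apply: (IA); [apply: (IA)|]; apply: (IM) => //.
- move=> z Az; apply: NNPP => pz; apply: (Adisj z) => //.
  exists z, 1; split => //; [exact: prime_not1|by rewrite mulr1].
- move=> z Az; apply: NNPP => qz; apply: (Adisj z) => //.
  exists 1, z; split => //; [exact: prime_not1|by rewrite mul1r].
Qed.


Local Notation K := {fraction R}.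
Local Notation tf := (@FracField.tofrac R).

Lemma nzp s : ~ p s -> tf s != 0.
Proof. by move=> ps; rewrite tofrac_eq0; apply/eqP => E; apply: ps; rewrite E; exact: ideal0. Qed.
Lemma nzq s : ~ q s -> tf s != 0.
Proof. by move=> ps; rewrite tofrac_eq0; apply/eqP => E; apply: ps; rewrite E; exact: ideal0. Qed.

Definition Jp (x : K) := exists a s t, [/\ ~ p s, ~ q t & x = tf a / tf (s * t)].
Definition Mp (x : K) := exists a s t, [/\ ~ p s, ~ q t, x = tf a / tf (s * t) & U a].

Lemma p1 : ~ p 1. Proof. exact: prime_not1. Qed.
Lemma q1 : ~ q 1. Proof. exact: prime_not1. Qed.

Lemma join_iff x :
  subring_join (localization_in_frac p) (localization_in_frac q) x <-> Jp x.
Proof.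
split.
- move=> H; apply: H.
  + split.
    * exists 1, 1, 1; split; [exact: p1|exact: q1|by rewrite mulr1 tofrac1 invr1 mulr1].
    * move=> x1 y1 [a [s [t [ps qt ->]]]] [b [s' [t' [ps' qt' ->]]]].
      exists (a * (s' * t') - b * (s * t)), (s * s'), (t * t').
      split; [exact: prime_mul|exact: prime_mul|].
      have := nzp ps; have := nzp ps'; have := nzq qt; have := nzq qt'.
      rewrite !tofracM tofracB !tofracM => h1 h2 h3 h4; by apply: fsub.
    * move=> x1 y1 [a [s [t [ps qt ->]]]] [b [s' [t' [ps' qt' ->]]]].
      exists (a * b), (s * s'), (t * t').
      split; [exact: prime_mul|exact: prime_mul|].
      have := nzp ps; have := nzp ps'; have := nzq qt; have := nzq qt'.
      rewrite !tofracM => h1 h2 h3 h4; by apply: fmul.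
  + move=> y [a [s [ps ->]]]; exists a, s, 1; split => //; [exact: q1|by rewrite mulr1].
  + move=> y [a [t [qt ->]]]; exists a, 1, t; split => //; [exact: p1|by rewrite mul1r].
- move=> [a [s [t [ps qt ->]]]] S [S1 Ssub Smul] HA HB.
  have -> : tf a / tf (s * t) = (tf a / tf s) * (tf 1 / tf t).
    have := nzp ps; have := nzq qt.
    rewrite !tofracM tofrac1 => h1 h2; by apply: fsplit.
  by apply: Smul; [apply: HA; exists a, s|apply: HB; exists 1, t].
Qed.

Lemma M_nonunit x y : Mp x -> Jp y -> x * y = 1 -> False.
Proof.
move=> [a [s [t [ps qt -> Ua]]]] [b [s' [t' [ps' qt' ->]]]].
have E : tf a / tf (s * t) * (tf b / tf (s' * t')) = tf (a * b) / tf ((s * s') * (t * t')).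
  have := nzp ps; have := nzp ps'; have := nzq qt; have := nzq qt'.
  rewrite !tofracM => h1 h2 h3 h4; by apply: fmul.
have Tu : Tm ((s * s') * (t * t')).
  by exists (s * s'), (t * t'); split; [exact: prime_mul|exact: prime_mul|].
have nz : tf ((s * s') * (t * t')) != 0.
  by rewrite !tofracM; apply: mulf_neq0; apply: mulf_neq0; [exact: nzp|exact: nzp|exact: nzq|exact: nzq].
rewrite E => H1.
have H2 : tf (a * b) = tf ((s * s') * (t * t')).
  by rewrite -(divfK nz (tf (a * b))) H1 mul1r.
have H3 : a * b = (s * s') * (t * t') by apply/eqP; rewrite -tofrac_eq H2.
case: Ua => P [g Pa].
apply: (good_disj g Tu); rewrite -H3.
by case: g => [[[_ _ _ HM] _ _] _ _]; rewrite mulrC; apply: HM.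
Qed.

Lemma unit_of a s t : ~ p s -> ~ q t -> ~ U a ->
  exists y, Jp y /\ tf a / tf (s * t) * y = 1.
Proof.
move=> ps qt nU.
have [b [u [Tu E]]] : exists b u, Tm u /\ a * b = u.
  apply: NNPP => Hn; apply: nU; apply: zorn_prime => b u Tu E; apply: Hn; exists b, u.
  by [].
case: Tu => s1 [t1 [ps1 qt1 Eu]].
exists (tf (b * (s * t)) / tf (s1 * t1)); split.
  by exists (b * (s * t)), s1, t1.
have -> : tf a / tf (s * t) * (tf (b * (s * t)) / tf (s1 * t1)) = tf (a * b) / tf (s1 * t1).
  have := nzp ps; have := nzp ps1; have := nzq qt; have := nzq qt1.
  rewrite !tofracM => h1 h2 h3 h4; by apply: fmul2.
rewrite E Eu divff // tofracM; apply: mulf_neq0; [exact: nzp|exact: nzq].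
Qed.

Definition Sj := subring_join (localization_in_frac p) (localization_in_frac q).

Lemma proper_sub J' : is_ideal_of Sj J' -> ~ J' 1 -> forall x, J' x -> Mp x.
Proof.
move=> [JS J0 JB JM] J1 x Jx.
have := JS x Jx; rewrite /Sj join_iff => -[a [s [t [ps qt Ex]]]].
case: (classic (U a)) => Ua; first by exists a, s, t.
have [y [Jy xy]] := unit_of ps qt Ua.
exfalso; apply: J1; rewrite -xy -Ex mulrC; apply: JM => //.
by rewrite /Sj join_iff.
Qed.

Lemma M_ideal : is_ideal_of Sj Mp.
Proof.
split.
- move=> x [a [s [t [ps qt Ex _]]]]; rewrite /Sj join_iff; by exists a, s, t.
- exists 0, 1, 1; split; [exact: p1|exact: q1| |exact: U0].
  by rewrite tofrac0 mul0r.
- move=> x1 y1 [a [s [t [ps qt -> Ua]]]] [b [s' [t' [ps' qt' -> Ub]]]].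
  exists ((s' * t') * a + (- (s * t)) * b), (s * s'), (t * t').
  split; [exact: prime_mul|exact: prime_mul| |by apply: U_add; apply: U_mul].
  have := nzp ps; have := nzp ps'; have := nzq qt; have := nzq qt'.
  rewrite !(tofracM, tofracD, tofracN) => h1 h2 h3 h4; by apply: fsub2.
- move=> r x; rewrite /Sj join_iff => -[c [s' [t' [ps' qt' ->]]]] [a [s [t [ps qt -> Ua]]]].
  exists (c * a), (s' * s), (t' * t).
  split; [exact: prime_mul|exact: prime_mul| |by apply: U_mul].
  have := nzp ps; have := nzp ps'; have := nzq qt; have := nzq qt'.
  rewrite !tofracM => h1 h2 h3 h4; by apply: fmul3.
Qed.

Lemma M_maximal : is_maximal_ideal_of Sj Mp.
Proof.
split; first exact: M_ideal.
- move=> M1; apply: (M_nonunit M1 (y := 1)); last by rewrite mulr1.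
  exists 1, 1, 1; split; [exact: p1|exact: q1|by rewrite mulr1 tofrac1 invr1 mulr1].
- move=> J' HJ J1 _; exact: proper_sub.
Qed.

Lemma local_main : is_local_subring Sj.
Proof.
exists Mp; split; first exact: M_maximal.
move=> M' [HM' M'1 maxM'] x; split; first exact: proper_sub.
apply: maxM' => //; [exact: M_ideal| |].
- case: M_maximal => _ //.
- exact: proper_sub.
Qed.

End RingPart.

Theorem mainTheorem7 (R : idomainType)
  (hIIP : irreducible_intersection_property R)
  (p q : R -> Prop) (hp : is_prime_ideal p) (hq : is_prime_ideal q) :
  is_local_subring (subring_join (localization_in_frac p) (localization_in_frac q)).
Proof. exact: (local_main hp hq hIIP). Qed.
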